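(* Let $\mathcal{H}$ be a $k$-uniform hypergraph with vertex degrees $d_i$. Then \[ \rho(\mathcal{Q}(\mathcal{H}))\leq\max_{e\in E(\mathcal{H})}\max_{\{i,j\}\subseteq e}(d_{i}+d_{j}). \]
   Context: A $k$-uniform hypergraph $\mathcal{H}$ on vertex set $[n]$ has edges that are $k$-element subsets of $[n]$; $d_i$ is the number of edges containing vertex $i$. The adjacency tensor $\mathcal{A}(\mathcal{H})$ has entries $\mathcal{A}_{i_1\cdots i_k}=\frac{1}{(k-1)!}$ if $\{i_1,\dots,i_k\}\in E(\mathcal{H})$ and $0$ otherwise; $\mathcal{D}(\mathcal{H})$ is the diagonal tensor with $\mathcal{D}_{i\cdots i}=d_i$; $\mathcal{Q}(\mathcal{H})=\mathcal{D}(\mathcal{H})+\mathcal{A}(\mathcal{H})$ is the signless Laplacian tensor. For a tensor $\mathcal{T}$ and $x\in\mathbb{C}^n$, $(\mathcal{T}x)_i=\sum_{i_2,\dots,i_k}\mathcal{T}_{ii_2\cdots i_k}x_{i_2}\cdots x_{i_k}$; $\lambda$ is an eigenvalue if $\mathcal{T}x=\lambda x^{[k-1]}$ for some nonzero $x$, where $x^{[k-1]}=(x_1^{k-1},\dots,x_n^{k-1})^T$; $\rho(\mathcal{T})$ is the maximum modulus of eigenvalues. *)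

(* Defs.v *)
From mathcomp Require Import all_boot all_order all_algebra.
Set Implicit Arguments. Unset Strict Implicit. Unset Printing Implicit Defensive.
Import Order.TTheory GRing.Theory Num.Theory.
Local Open Scope ring_scope.

Definition uniform_hypergraph (n k : nat) (E : {set {set 'I_n}}) : Prop :=
  forall e, e \in E -> #|e| = k.

Definition hdeg (n : nat) (E : {set {set 'I_n}}) (i : 'I_n) : nat :=
  #|[set e in E | i \in e]|.

(* An order-k, dimension-n tensor over C: entries T (i_1 :: ... :: i_k),
   indexed by index sequences (only sequences of length k are used). *)
Definition tensor (C : Type) (n : nat) := seq 'I_n -> C.

Definition adj_tensor (C : numClosedFieldType) (n k : nat) (E : {set {set 'I_n}})
  : tensor C n :=
  fun s => if (size s == k) && ([set x in s] \in E) then (k.-1)`!%:R^-1 else 0.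

Definition deg_tensor (C : numClosedFieldType) (n k : nat) (E : {set {set 'I_n}})
  : tensor C n :=
  fun s => if s is i :: t then
             (if (size s == k) && all (fun j => j == i) t then (hdeg E i)%:R else 0)
           else 0.

Definition signless_laplacian (C : numClosedFieldType) (n k : nat)
  (E : {set {set 'I_n}}) : tensor C n :=
  fun s => deg_tensor C k E s + adj_tensor C k E s.

Definition tensor_apply (C : numClosedFieldType) (n k : nat) (T : tensor C n)
  (x : 'I_n -> C) (i : 'I_n) : C :=
  \sum_(t : (k.-1).-tuple 'I_n) T (i :: val t) * \prod_(j <- val t) x j.

Definition tensor_eigenvalue (C : numClosedFieldType) (n k : nat) (T : tensor C n)
  (lambda : C) : Prop :=
  exists x : 'I_n -> C, (exists i, x i != 0) /\
    forall i, tensor_apply k T x i = lambda * x i ^+ k.-1.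

(* max over edges e, over 2-subsets {i,j} of e (i <> j), of d_i + d_j;
   0 if there are no edges *)
Definition pair_degree_bound (n : nat) (E : {set {set 'I_n}}) : nat :=
  \max_(e in E) \max_(i in e) \max_(j in e | j != i) (hdeg E i + hdeg E j)%N.

(* Main.v *)
Require Import Defs.
From mathcomp Require Import all_boot all_order all_algebra.
Import Order.TTheory GRing.Theory Num.Theory.
Local Open Scope ring_scope.

Lemma edge_uniq (n k : nat) (E : {set {set 'I_n}}) (s : seq 'I_n) :
  uniform_hypergraph k E -> size s = k -> [set y in s] \in E -> uniq s.
Proof.
move=> hu hs hE; apply/card_uniqP; rewrite -cardsE hu //.
Qed.

Lemma count_bound (n k : nat) (E : {set {set 'I_n}}) (i : 'I_n) :
  (0 < k)%N -> uniform_hypergraph k E ->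
  (#|[set t : (k.-1).-tuple 'I_n | [set y in i :: val t] \in E]|
     <= (hdeg E i) * (k.-1)`!)%N.
Proof.
move=> k0 hu.
rewrite -sum1dep_card.
rewrite (partition_big (fun t : (k.-1).-tuple 'I_n => [set y in i :: val t])
           (fun e => (e \in E) && (i \in e))) /=; last first.
  by move=> t ->; rewrite inE mem_head.
apply: (@leq_trans (\sum_(e | (e \in E) && (i \in e)) (k.-1)`!)%N).
  apply: leq_sum => e /andP[eE ie].
  rewrite sum1dep_card.
  set T := [set t : (k.-1).-tuple 'I_n | all (mem (e :\ i)) t & uniq t].
  apply: (@leq_trans #|T|).
    apply: subset_leq_card; apply/subsetP => t.
    rewrite !inE => /andP[hE /eqP hS].
    have hsz : size (i :: val t) = k by rewrite /= size_tuple prednK.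
    have := @edge_uniq _ _ _ _ hu hsz hE => /= /andP[nit ut].
    rewrite ut andbT; apply/allP => j jt.
    rewrite !inE -hS inE /=. rewrite in_cons jt orbT andbT.
    by apply/eqP => ji; rewrite -ji jt in nit.
  rewrite card_uniq_tuples.
  have : #|e| = k by apply: hu.
  rewrite (cardsD1 i) ie add1n => <- /=; rewrite ffactnn. done.
rewrite sum_nat_const /hdeg -cardsE.
by rewrite leq_eqVlt; apply/orP; left; apply/eqP; congr (#|_| * _)%N; apply/setP => e; rewrite !inE.
Qed.


Lemma deg_part (C : numClosedFieldType) (n k : nat) (E : {set {set 'I_n}}) (x : 'I_n -> C) (i : 'I_n) :
  (0 < k)%N ->
  \sum_(t : (k.-1).-tuple 'I_n) deg_tensor C k E (i :: val t) * \prod_(j <- val t) x j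
  = (hdeg E i)%:R * x i ^+ k.-1.
Proof.
move=> k0.
rewrite (bigD1 (nseq_tuple k.-1 i)) //= [X in _ + X]big1 ?addr0; last first.
  move=> t tne; rewrite /deg_tensor /= size_tuple prednK // eqxx /=.
  case: ifP => [hall|_]; last by rewrite mul0r.
  have ht : val t = nseq (size t) i by apply/all_pred1P.
  exfalso; move/eqP: tne; apply.
  by apply: val_inj => /=; rewrite ht size_tuple.
rewrite /deg_tensor /= size_nseq prednK // eqxx /=.
have -> : all (fun j => j == i) (nseq k.-1 i) by apply/all_pred1P; rewrite size_nseq.
congr (_ * _); rewrite big_nseq.
by elim: (k.-1) => //= m ->; rewrite exprS.
Qed.

Lemma adj_part (C : numClosedFieldType) (n k : nat) (E : {set {set 'I_n}}) (x : 'I_n -> C) (i : 'I_n) (M : C) :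
  (0 < k)%N -> uniform_hypergraph k E -> 0 <= M ->
  (forall j e, e \in E -> i \in e -> j \in e -> j != i -> `|x j| <= M) ->
  `|\sum_(t : (k.-1).-tuple 'I_n) adj_tensor C k E (i :: val t) * \prod_(j <- val t) x j|
  <= (hdeg E i)%:R * M ^+ k.-1.
Proof.
move=> k0 hu M0 hM.
set c : C := (k.-1)`!%:R^-1.
have c0 : 0 <= c by rewrite /c invr_ge0 ler0n.
apply: le_trans (ler_norm_sum _ _ _) _.
apply: (@le_trans _ _ (\sum_(t : (k.-1).-tuple 'I_n)
   (if [set y in i :: val t] \in E then c * M ^+ k.-1 else 0))).
  apply: ler_sum => t _.
  rewrite /adj_tensor /= size_tuple prednK // eqxx /=.
  case: ifP => hE; last by rewrite mul0r normr0.
  rewrite normrM ger0_norm // ler_wpM2l // normr_prod.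
  have hsz : size (i :: val t) = k by rewrite /= size_tuple prednK.
  have := @edge_uniq _ _ _ _ hu hsz hE => /= /andP[nit ut].
  apply: (@le_trans _ _ (\prod_(j <- val t) M)).
    rewrite big_seq [X in _ <= X]big_seq; apply: ler_prod => j jt.
    rewrite normr_ge0 /=; apply: (hM j _ hE).
    - by rewrite inE mem_head.
    - by rewrite inE in_cons jt orbT.
    by apply/eqP => ji; rewrite -ji jt in nit.
  rewrite big_const_seq.
  rewrite count_predT size_tuple le_eqVlt; apply/orP; left; apply/eqP.
  by elim: (k.-1) => //= m ->; rewrite exprS.
rewrite -big_mkcond /= sumr_const.
have hc := @count_bound n k E i k0 hu.
rewrite -[X in X <= _]mulr_natr [X in X <= _]mulrAC.
apply: ler_wpM2r; first exact: exprn_ge0.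
apply: (@le_trans _ _ (c * ((hdeg E i) * (k.-1)`!)%:R)).
  by apply: ler_wpM2l => //; rewrite ler_nat -cardsE.
rewrite natrM mulrC -mulrA /c mulfV ?mulr1 //.
by rewrite pnatr_eq0 -lt0n fact_gt0.
Qed.


Lemma exmax (T : eqType) (R : numDomainType) (f : T -> R) (s : seq T) :
  (forall j, 0 <= f j) -> s != [::] ->
  exists2 u, u \in s & forall j, j \in s -> f j <= f u.
Proof.
move=> f0; elim: s => // a s IH _.
case: s IH => [|b s] IH.
  by exists a => [|j]; rewrite ?mem_head // inE => /eqP ->.
have [u us hu] := IH isT.
have := real_leVge (ger0_real (f0 a)) (ger0_real (f0 u)).
case/orP => h.
  exists u; first by rewrite in_cons us orbT.
  move=> j; rewrite in_cons => /orP[/eqP -> //|]; exact: hu.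
exists a; first exact: mem_head.
move=> j; rewrite in_cons => /orP[/eqP -> //|/hu hj]; exact: le_trans hj h.
Qed.

Lemma eig_rel (C : numClosedFieldType) (n k : nat) (E : {set {set 'I_n}})
  (x : 'I_n -> C) (lam : C) (i : 'I_n) :
  (0 < k)%N ->
  tensor_apply k (signless_laplacian C k E) x i = lam * x i ^+ k.-1 ->
  (lam - (hdeg E i)%:R) * x i ^+ k.-1 =
  \sum_(t : (k.-1).-tuple 'I_n) adj_tensor C k E (i :: val t) * \prod_(j <- val t) x j.
Proof.
move=> k0; rewrite /tensor_apply /signless_laplacian.
under eq_bigr do rewrite mulrDl.
rewrite big_split /= deg_part // => h.
by rewrite mulrBl -h addrAC subrr add0r.
Qed.

Lemma key (C : numClosedFieldType) (n k : nat) (E : {set {set 'I_n}})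
  (x : 'I_n -> C) (lam : C) (i : 'I_n) (M : C) :
  (0 < k)%N -> uniform_hypergraph k E -> 0 <= M ->
  (forall j e, e \in E -> i \in e -> j \in e -> j != i -> `|x j| <= M) ->
  tensor_apply k (signless_laplacian C k E) x i = lam * x i ^+ k.-1 ->
  `|lam - (hdeg E i)%:R| * `|x i| ^+ k.-1 <= (hdeg E i)%:R * M ^+ k.-1.
Proof.
move=> k0 hu M0 hM he.
rewrite -normrX -normrM eig_rel //.
exact: adj_part.
Qed.


Lemma bound_ge (n : nat) (E : {set {set 'I_n}}) e u v :
  e \in E -> u \in e -> v \in e -> v != u ->
  (hdeg E u + hdeg E v <= pair_degree_bound E)%N.
Proof.
move=> eE ue ve vu; rewrite /pair_degree_bound.
apply: leq_trans (leq_bigmax_cond _ eE).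
apply: leq_trans (leq_bigmax_cond _ ue).
apply: (@leq_bigmax_cond _ (fun j => (j \in e) && (j != u)) (fun j => (hdeg E u + hdeg E j)%N) v).
by rewrite ve vu.
Qed.

Theorem corollary2p2 (C : numClosedFieldType) (n k : nat) (E : {set {set 'I_n}}) :
  (2 <= k)%N -> uniform_hypergraph k E ->
  forall lambda : C, tensor_eigenvalue k (signless_laplacian C k E) lambda ->
    `|lambda| <= (pair_degree_bound E)%:R.
Proof.
move=> k2 hu lam [x [[i0 xi0] heig]].
have k0 : (0 < k)%N by apply: leq_trans k2.
have [u _ hmax] : exists2 u, u \in enum 'I_n & forall j, j \in enum 'I_n -> `|x j| <= `|x u|.
  apply: exmax => //; apply/eqP => h.
  by have := mem_enum 'I_n i0; rewrite h.
have hmax' : forall j, `|x j| <= `|x u| by move=> j; apply: hmax; rewrite mem_enum.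
have xu0 : x u != 0.
  apply: contraNneq xi0 => xu; rewrite -normr_eq0 eq_le normr_ge0 andbT.
  by rewrite -(normr0 C) -xu hmax'.
have a0 : 0 < `|x u| ^+ k.-1 by rewrite exprn_gt0 // normr_gt0.
have [du0|dupos] := posnP (hdeg E u).
  have : `|lam - (hdeg E u)%:R| * `|x u| ^+ k.-1 <= (hdeg E u)%:R * 0 ^+ k.-1.
    apply: key => //.
    move=> j e eE ue _ _; have := card0_eq du0 e; rewrite !inE eE ue //.
  rewrite du0 subr0 mul0r pmulr_lle0 // => h.
  by apply: le_trans h _; rewrite ler0n.
have [e eE ue] : exists2 e, e \in E & u \in e.
  by case/card_gt0P: dupos => e; rewrite inE => /andP[? ?]; exists e.
have [v0 v0e] : exists v0, v0 \in e :\ u.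
  apply/card_gt0P; move: (hu e eE); rewrite (cardsD1 u) ue add1n => hk.
  by rewrite -ltnS hk.
pose Nb := [pred j | [exists e, [&& (e \in E), (u \in e), (j \in e) & (j != u)]]].
have [v vE hv] : exists2 v, v \in enum Nb & forall j, j \in enum Nb -> `|x j| <= `|x v|.
  apply: exmax => //; apply/eqP => h.
  have : v0 \in enum Nb.
    rewrite mem_enum inE; apply/existsP; exists e.
    by move: v0e; rewrite !inE eE ue => /andP[-> ->].
  by rewrite h.
have hv' : forall j e, e \in E -> u \in e -> j \in e -> j != u -> `|x j| <= `|x v|.
  move=> j e' e'E ue' je' ju; apply: hv; rewrite mem_enum inE.
  by apply/existsP; exists e'; rewrite e'E ue' je' ju.
have vNb : v \in Nb by move: vE; rewrite mem_enum.
move: vNb; rewrite inE => /existsP [e' /and4P[e'E ue' ve' vu]].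
have hB := @bound_ge _ _ _ _ _ e'E ue' ve' vu.
apply: (@le_trans _ _ ((hdeg E u)%:R + (hdeg E v)%:R)); last by rewrite -natrD ler_nat.
have H1 : `|lam - (hdeg E u)%:R| * `|x u| ^+ k.-1 <= (hdeg E u)%:R * `|x v| ^+ k.-1.
  by apply: key => //; exact: hv'.
have H2 : `|lam - (hdeg E v)%:R| * `|x v| ^+ k.-1 <= (hdeg E v)%:R * `|x u| ^+ k.-1.
  by apply: key => //; move=> j *; exact: hmax'.
set a := `|x u| ^+ k.-1 in a0 H1 H2.
set b := `|x v| ^+ k.-1 in H1 H2.
set du : C := (hdeg E u)%:R in H1 H2 *.
set dv : C := (hdeg E v)%:R in H1 H2 *.
have b0 : 0 <= b by rewrite exprn_ge0.
have [bz|bnz] := eqVneq b 0.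
  move: H1; rewrite bz mulr0 pmulr_lle0 // normr_le0 subr_eq0 => /eqP ->.
  by rewrite ger0_norm ?ler0n // lerDl ler0n.
have bpos : 0 < b by rewrite lt_def bnz b0.
set p := `|lam - du| in H1. set q := `|lam - dv| in H2.
have hpq : p * q <= du * dv.
  have : (p * a) * (q * b) <= (du * b) * (dv * a).
    apply: ler_pM => //; rewrite ?mulr_ge0 ?normr_ge0 // ltW //.
  rewrite mulrACA [X in _ <= X]mulrACA [b * a]mulrC.
  by rewrite ler_pM2r // mulr_gt0.
have du0 : 0 <= du by rewrite ler0n.
have dv0 : 0 <= dv by rewrite ler0n.
have rL : `|lam| \is Num.real by apply: normr_real.
have rD : du + dv \is Num.real by apply: realD; apply: ger0_real.
rewrite real_leNgt //; apply/negP => hlt.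
have hp : `|lam| - du <= p.
  by have := lerB_normD lam (- du); rewrite normrN (ger0_norm du0) => h; exact: h.
have hq : `|lam| - dv <= q.
  by have := lerB_normD lam (- dv); rewrite normrN (ger0_norm dv0) => h; exact: h.
have h1 : dv < `|lam| - du by rewrite ltrBrDr addrC.
have h2 : du < `|lam| - dv by rewrite ltrBrDr.
have : dv * du < p * q.
  apply: lt_le_trans (_ : (`|lam| - du) * (`|lam| - dv) <= _).
    exact: ltr_pM.
  apply: ler_pM => //; apply: ltW; [exact: le_lt_trans h1|exact: le_lt_trans h2].
by rewrite mulrC; move/lt_le_trans => /(_ _ hpq); rewrite ltxx.
Qed.
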